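(* Let $\pi$ be a group and $\rho\in\mathcal R(\pi,\widetilde{\mathrm{E}}_2)$. Let $s,t\in\pi$ be commuting elements generating a subgroup of $\pi$ isomorphic to $\mathbb Z\oplus\mathbb Z$. Then the rotational parts of $\rho(s)$ and $\rho(t)$ lie in $2\pi\mathbb Z$; equivalently their images in $\mathrm{E}_2$ are translations of $\mathbb R^2$ (and $\rho(s),\rho(t)$ act as translations of $\mathbb R^3$).
   Context: $\widetilde{\mathrm{E}}_2$ is $\mathbb R^3$ with coordinates $((x,y),\theta)$ and product $((x_0,y_0),\theta_0)\cdot((x,y),\theta)=(R_{\theta_0}(x,y)^T+(x_0,y_0)^T,\theta_0+\theta)$, $R_{\theta_0}$ the rotation matrix by angle $\theta_0$; $(x,y)$ is the translational part and $\theta$ the rotational part. It is the universal cover of $\mathrm{E}_2$, the group of orientation-preserving isometries of $\mathbb R^2$. $\mathcal R(\pi,\widetilde{\mathrm{E}}_2)$ is the set of faithful homomorphisms $\pi\to\widetilde{\mathrm{E}}_2$ with discrete cocompact image. *)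

(* Defs.v *)
From HB Require Import structures.
From mathcomp Require Import all_boot all_order all_algebra.
From mathcomp Require Import all_classical all_reals all_analysis.
Set Implicit Arguments. Unset Strict Implicit. Unset Printing Implicit Defensive.
Import Order.TTheory GRing.Theory Num.Theory.
Import numFieldNormedType.Exports.
Local Open Scope classical_set_scope.
Local Open Scope ring_scope.

Record group := Group {
  gcar :> Type;
  gmul : gcar -> gcar -> gcar;
  gone : gcar;
  ginv : gcar -> gcar;
  gmulA : forall x y z, gmul x (gmul y z) = gmul (gmul x y) z;
  gmul1 : forall x, gmul gone x = x;
  gmulV : forall x, gmul (ginv x) x = gone }.

Definition is_subgroup (G : group) (H : set G) : Prop :=
  H (gone G) /\ (forall x y, H x -> H y -> H (gmul x y)) /\
  (forall x, H x -> H (ginv x)).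

Definition gen_subgroup (G : group) (A : set G) : set G :=
  fun x => forall H : set G, is_subgroup H -> A `<=` H -> H x.

Definition gen_iso_ZZ (G : group) (s t : G) : Prop :=
  exists f : int * int -> G,
    (forall a b : int * int, f (a.1 + b.1, a.2 + b.2) = gmul (f a) (f b)) /\
    injective f /\
    range f = gen_subgroup [set x | x = s \/ x = t].

(* The universal cover E2~ of E2: R^3 with coordinates ((x,y),theta). *)
Notation E2t R := ((R * R) * R)%type.

Definition E2t_mul (R : realType) (g h : E2t R) : E2t R :=
  let: ((x0, y0), th0) := g in
  let: ((x, y), th) := h in
  ((cos th0 * x - sin th0 * y + x0, sin th0 * x + cos th0 * y + y0), th0 + th).

Definition discrete_subset (R : realType) (S : set (E2t R)) : Prop :=
  forall g, S g -> exists U : set (E2t R), nbhs g U /\ U `&` S = [set g].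

Definition cocompact_subset (R : realType) (S : set (E2t R)) : Prop :=
  exists K : set (E2t R), compact K /\
    forall g : E2t R, exists gam k, S gam /\ K k /\ g = E2t_mul gam k.

(* R(pi, E2~): faithful homomorphisms with discrete cocompact image. *)
Definition in_RE2t (R : realType) (G : group) (rho : G -> E2t R) : Prop :=
  (forall a b, rho (gmul a b) = E2t_mul (rho a) (rho b)) /\
  injective rho /\
  discrete_subset (range rho) /\ cocompact_subset (range rho).

Definition rot_part (R : realType) (g : E2t R) : R := g.2.

(* Main.v *)
Require Import Defs.
From mathcomp Require Import all_boot all_order all_algebra.
From mathcomp Require Import all_classical all_reals all_analysis.
From mathcomp Require Import ring lra.
Import Order.TTheory GRing.Theory Num.Theory numFieldNormedType.Exports.
Local Open Scope ring_scope.

Lemma aux_bin (R : realType) (p q r : R) : r <= q -> q < r + 1 -> r <= p -> p < r + 1 -> `|p - q| < 1.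
Proof. move=> *; rewrite ltr_norml; apply/andP; split; lra. Qed.

Lemma aux_id (R : realType) (a b u v X Y : R) : b != 0 ->
  (u - v) * a + - (X - Y) * b = b * (u * a / b - X - (v * a / b - Y)).
Proof. move=> b0; field. done. Qed.

Lemma pigeon (R : realType) (a b d : R) : 0 < d ->
  (forall m n : int, `|m%:~R * a + n%:~R * b| < d -> m = 0 /\ n = 0) -> False.
Proof.
move=> d0 H.
have b0 : b != 0.
  apply/negP => /eqP b0; have := H 0 1; rewrite b0 mulr0 mul0r addr0 normr0 d0.
  by move=> /(_ isT) [_].
pose t := Num.truncn (`|b| / d).
pose M := t.+1.
pose y (k : nat) : R := (k%:R * a / b) - (Num.floor (k%:R * a / b))%:~R.
have y0 k : 0 <= y k.
  by rewrite /y subr_ge0 floor_le.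
have y1 k : y k < 1.
  by rewrite /y ltrBlDl -[1]/(1%:~R) -intrD; case/andP: (floor_itv (k%:R * a / b)).
pose bin (k : nat) : nat := Num.truncn (y k * M%:R).
have binlt k : (bin k < M)%N.
  rewrite /bin truncn_lt_nat ?mulr_ge0 //.
  by rewrite -{2}[M%:R]mul1r ltr_pM2r ?ltr0n.
pose F (k : 'I_M.+1) : 'I_M := inord (bin k).
have Finj : injective F.
  move=> k l /(congr1 val); rewrite /F /= !inordK // => ebin.
  have Hy : `|y k - y l| < M%:R^-1.
    have := truncn_itv (mulr_ge0 (y0 k) (ler0n _ M)).
    have := truncn_itv (mulr_ge0 (y0 l) (ler0n _ M)).
    rewrite -/(bin k) -/(bin l) ebin => /andP[h1 h2] /andP[h3 h4].
    rewrite -[X in _ < X]mul1r ltr_pdivlMr ?ltr0n // -[M%:R]ger0_norm ?ler0n // -normrM.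
    rewrite mulrBl; rewrite -natr1 in h2 h4.
    exact: aux_bin h1 h2 h3 h4.
  have := H (k%:Z - l%:Z) (- (Num.floor (k%:R * a / b) - Num.floor (l%:R * a / b))).
  case.
    rewrite intrN !intrB aux_id // normrM.
    change (`|b| * `|y k - y l| < d).
    have bp : 0 < `|b| by rewrite normr_gt0.
    apply: (lt_trans (y := `|b| * M%:R^-1)); first by rewrite ltr_pM2l.
    rewrite ltr_pdivrMr ?ltr0n // -ltr_pdivrMl // mulrC.
    by case/andP: (truncn_itv (divr_ge0 (normr_ge0 b) (ltW d0))).
  move=> /eqP; rewrite subr_eq0 => /eqP /(congr1 absz) /= ekl _.
  by apply/val_inj.
have := leq_card F Finj; rewrite !card_ord /M ltnn.
done.
Qed.
Lemma cos_nat (R : realType) (z : R) (n : nat) : cos (z + 2 * pi * n%:R) = cos z.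
Proof.
rewrite -(periodicn (@cosD2pi R) n z); congr cos; congr (_ + _).
by rewrite -[pi *+ 2]mulr_natl -mulr_natr mulr_natr.
Qed.

Lemma cos_int (R : realType) (z : R) (k : int) : cos (z + 2 * pi * k%:~R) = cos z.
Proof.
case: k => n; first exact: cos_nat.
rewrite NegzE intrN mulrN.
change (cos (z - 2 * pi * n.+1%:R) = cos z).
by rewrite -(@cos_nat R (z - 2 * pi * n.+1%:R) n.+1) subrK.
Qed.

Lemma cos_eq1 (R : realType) (x : R) : cos x = 1 -> exists k : int, x = 2 * pi * k%:~R.
Proof.
move=> cx.
have p0 : (0:R) < pi by exact: pi_gt0.
have tp0 : (0:R) < 2 * pi by apply: mulr_gt0.
exists (Num.floor (x / (2 * pi))).
set k := Num.floor _.
have /andP[h1 h2] := floor_itv (x / (2 * pi)); rewrite -/k intrD in h1 h2.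
set y := x - 2 * pi * k%:~R.
rewrite ler_pdivlMr // in h1.
rewrite ltr_pdivrMr // in h2.
have y0 : 0 <= y.
  by rewrite /y subr_ge0 mulrC.
have y2 : y < 2 * pi.
  by rewrite /y ltrBlDl; move: h2; rewrite mulrDl mul1r mulrC.
have cy : cos y = 1 by rewrite -cx -(@cos_int R y k) /y subrK.
suff : y = 0 by move=> /eqP; rewrite subr_eq0 => /eqP.
have c0 := @cos0 R.
have [ypi|piy] := lerP y pi.
  apply: cos_inj; rewrite ?in_itv /= ?y0 ?ypi ?lexx ?pi_ge0 //.
  by rewrite cy c0.
have : 2 * pi - y = 0.
  apply: cos_inj; rewrite ?in_itv /= ?lexx ?pi_ge0 //.
  - apply/andP; split; lra.
  - have := @cos_nat R (- y) 1; rewrite mulr1n mulr1 addrC => ->.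
    by rewrite cosN cy c0.
lra.
Qed.
Lemma sq_lt_abs (R : realType) (w e : R) : 0 < e -> w ^+ 2 < e ^+ 2 -> `|w| < e.
Proof.
move=> e0 h; case: (lerP 0 w) => hw; [rewrite ger0_norm // | rewrite ltr0_norm //]; nra.
Qed.

Lemma rot_mul (R : realType) (g h : E2t R) : (E2t_mul g h).2 = g.2 + h.2.
Proof. by case: g => [[? ?] ?]; case: h => [[? ?] ?]. Qed.

Lemma comm_norm (R : realType) (v1 v2 th w1 w2 ph : R) :
  E2t_mul ((v1, v2), th) ((w1, w2), ph) = E2t_mul ((w1, w2), ph) ((v1, v2), th) ->
  (2 - 2 * cos th) * (w1 ^+ 2 + w2 ^+ 2) = (2 - 2 * cos ph) * (v1 ^+ 2 + v2 ^+ 2).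
Proof.
rewrite /E2t_mul => -[e1 e2 _].
have D1 : (cos th * w1 - sin th * w2 + v1) - (cos ph * v1 - sin ph * v2 + w1) = 0
  by rewrite e1 subrr.
have D2 : (sin th * w1 + cos th * w2 + v2) - (sin ph * v1 + cos ph * v2 + w2) = 0
  by rewrite e2 subrr.
have C1 : cos th ^+ 2 + sin th ^+ 2 - 1 = 0 by rewrite cos2Dsin2 subrr.
have C2 : cos ph ^+ 2 + sin ph ^+ 2 - 1 = 0 by rewrite cos2Dsin2 subrr.
apply/eqP; rewrite -subr_eq0; apply/eqP.
set A := (cos th - 1) * w1 - sin th * w2.
set B := sin th * w1 + (cos th - 1) * w2.
set A' := (cos ph - 1) * v1 - sin ph * v2.
set B' := sin ph * v1 + (cos ph - 1) * v2.
have -> : (2 - 2 * cos th) * (w1 ^+ 2 + w2 ^+ 2) - (2 - 2 * cos ph) * (v1 ^+ 2 + v2 ^+ 2)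
  = ((cos th * w1 - sin th * w2 + v1) - (cos ph * v1 - sin ph * v2 + w1)) * (A + A')
  + ((sin th * w1 + cos th * w2 + v2) - (sin ph * v1 + cos ph * v2 + w2)) * (B + B')
  - (cos th ^+ 2 + sin th ^+ 2 - 1) * (w1 ^+ 2 + w2 ^+ 2)
  + (cos ph ^+ 2 + sin ph ^+ 2 - 1) * (v1 ^+ 2 + v2 ^+ 2).
  rewrite /A /B /A' /B'; ring.
by rewrite D1 D2 C1 C2; ring.
Qed.

Lemma double0 (R : realType) (x : R) : x = x + x -> x = 0.
Proof. move=> h; lra. Qed.

Lemma idem_e (R : realType) (x : E2t R) : x = E2t_mul x x -> x = ((0, 0), 0).
Proof.
case: x => [[v1 v2] th]; rewrite /E2t_mul => -[e1 e2 e3].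
have th0 := @double0 R _ e3.
move: e1 e2; rewrite th0 cos0 sin0 !mul1r !mul0r subr0 add0r => e1 e2.
by rewrite (@double0 R _ e1) (@double0 R _ e2).
Qed.

Lemma group_idem (G : group) (x : G) : x = gmul x x -> x = gone G.
Proof.
move=> e; rewrite -(gmul1 x) -(gmulV x) -gmulA -e //.
Qed.

Lemma int_additive (R : realType) (h : int -> R) :
  (forall m n, h (m + n) = h m + h n) -> forall m, h m = m%:~R * h 1.
Proof.
move=> hD.
have h0 : h 0 = 0.
  have e := hD 0 0; rewrite addr0 in e.
  have : h 0 + h 0 - h 0 = h 0 - h 0 by rewrite -e.
  by rewrite addrK subrr.
have hn : forall n : nat, h n = n%:R * h 1.
  elim => [|n IH]; first by rewrite h0 mul0r.
  by rewrite -addn1 PoszD hD IH natrD mulrDl mul1r.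
case=> n; first exact: hn.
rewrite NegzE.
have : h (- (n.+1)%:Z) + h (n.+1)%:Z = 0 by rewrite -hD addNr h0.
rewrite hn intrN mulNr => e.
by move/eqP: e; rewrite addr_eq0 => /eqP ->.
Qed.

Lemma hlp_eta (R : realType) (K e V : R) : 0 < 2 * (V + 1) ->
  K * e ^+ 2 = 2 * (K * e ^+ 2 / (2 * (V + 1))) * (V + 1).
Proof.
move=> h; have h' : 2 * (V + 1) != 0 by rewrite lt0r_neq0.
field; by apply: contraNneq h' => ->; rewrite mulr0.
Qed.

Lemma lt_succ (R : realType) (x : R) : x < x + 1.
Proof. lra. Qed.

Lemma main_cos (R : realType) (G : group) (rho : G -> E2t R) (f : int * int -> G)
  (a0 : int * int) :
  in_RE2t rho ->
  (forall a b : int * int, f (a.1 + b.1, a.2 + b.2) = gmul (f a) (f b)) ->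
  injective f -> cos (rho (f a0)).2 = 1.
Proof.
move=> [hom [inj [disc _]]] fD finj.
have [//|cne] := eqVneq (cos (rho (f a0)).2) 1.
exfalso.
have rho1 : rho (gone G) = ((0, 0), 0).
  by apply: idem_e; rewrite -hom gmul1.
have f0 : f (0, 0) = gone G.
  by apply: group_idem; rewrite -fD /= addr0.
have rg : range rho (rho (gone G)) by exists (gone G).
have [U [nU UI]] := disc _ rg.
rewrite rho1 in nU UI.
have [eps eps0 Heps] : exists2 e : R, 0 < e & forall p : E2t R,
    `|p.1.1| < e -> `|p.1.2| < e -> `|p.2| < e -> U p.
  move: nU => /(@nbhs_ballP R) [e e0 H]; exists e => // p h1 h2 h3; apply: H.
  by split; [split|] => /=; rewrite /ball /= sub0r normrN.
have small : forall p, range rho p -> `|p.1.1| < eps -> `|p.1.2| < eps ->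
    `|p.2| < eps -> p = ((0, 0), 0).
  move=> p rp h1 h2 h3.
  have : (U `&` range rho)%classic p by split => //; apply: Heps.
  by rewrite UI.
have comm a : E2t_mul (rho (f a0)) (rho (f a)) = E2t_mul (rho (f a)) (rho (f a0)).
  by rewrite -!hom -!fD addrC [a0.2 + _]addrC.
move: cne comm; case E0 : (rho (f a0)) => [[v1 v2] th] cne comm.
have K0 : 0 < 2 - 2 * cos th.
  have h1 := cos_le1 th.
  have h2 : cos th < 1 by rewrite lt_neqAle cne h1.
  by rewrite subr_gt0 -[X in _ < X]mulr1 ltr_pM2l.
set K := 2 - 2 * cos th in K0.
set V := v1 ^+ 2 + v2 ^+ 2.
have V0 : 0 <= V by rewrite addr_ge0 ?sqr_ge0.
have V1 : 0 < 2 * (V + 1) by rewrite mulr_gt0 // ltr_wpDl.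
pose eta := K * eps ^+ 2 / (2 * (V + 1)).
have eta0 : 0 < eta by rewrite divr_gt0 // mulr_gt0 // exprn_gt0.
have [d1 d10 Hd1] : exists2 d : R, 0 < d & forall x : R, `|x| < d -> `|1 - cos x| < eta.
  have := cvgr_dist_lt _ _ (@continuous_cos R 0) _ eta0.
  rewrite cos0 => H0; have [d d0 H] := (nbhs_ballP _ _).1 (H0 _); exists d => // x hx; apply: (H x).
  by rewrite /ball /= sub0r normrN.
pose d := Num.min d1 eps.
have d0 : 0 < d by rewrite lt_min d10 eps0.
have key a : `|(rho (f a)).2| < d -> a = (0, 0).
  move=> ha; apply: finj; rewrite f0; apply: inj; rewrite rho1.
  have rp : range rho (rho (f a)) by exists (f a).
  move: (comm a) rp ha; case: (rho (f a)) => [[w1 w2] ph] /comm_norm eq rp /= ha.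
  have hd1 : `|ph| < d1 by apply: (lt_le_trans ha); rewrite ge_min lexx.
  have heps : `|ph| < eps by apply: (lt_le_trans ha); rewrite ge_min lexx orbT.
  have hc : 1 - cos ph <= eta by apply: ltW; apply: le_lt_trans (Hd1 _ hd1); exact: ler_norm.
  set W := w1 ^+ 2 + w2 ^+ 2 in eq.
  have hW : K * W < K * eps ^+ 2.
    rewrite -/K in eq; rewrite eq.
    apply: (le_lt_trans (y := 2 * eta * V)).
      have -> : 2 - 2 * cos ph = 2 * (1 - cos ph) by rewrite mulrBr mulr1.
      rewrite ler_wpM2r //.
      by rewrite ler_wpM2l.
    have -> : K * eps ^+ 2 = 2 * eta * (V + 1).
      exact: hlp_eta.
    by rewrite ltr_pM2l ?lt_succ // mulr_gt0.
  rewrite ltr_pM2l // in hW.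
  have hw1 : w1 ^+ 2 < eps ^+ 2 by apply: le_lt_trans hW; rewrite /W lerDl sqr_ge0.
  have hw2 : w2 ^+ 2 < eps ^+ 2 by apply: le_lt_trans hW; rewrite /W lerDr sqr_ge0.
  by apply: small => //=; apply: sq_lt_abs.
pose Gr a := (rho (f a)).2.
have GrD a b : Gr (a.1 + b.1, a.2 + b.2) = Gr a + Gr b by rewrite /Gr fD hom rot_mul.
have GrD' (m1 m2 n1 n2 : int) : Gr (m1 + n1, m2 + n2) = Gr (m1, m2) + Gr (n1, n2).
  exact: (GrD (m1, m2) (n1, n2)).
have lin m n : Gr (m, n) = m%:~R * Gr (1, 0) + n%:~R * Gr (0, 1).
  have e1 := GrD' m 0 0 n; rewrite addr0 add0r in e1; rewrite e1.
  have hm : forall x : int, Gr (x, 0) = x%:~R * Gr (1, 0).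
    apply: (@int_additive R (fun m => Gr (m, 0))) => x y.
    by have := GrD' x 0 y 0; rewrite addr0.
  have hn : forall x : int, Gr (0, x) = x%:~R * Gr (0, 1).
    apply: (@int_additive R (fun m => Gr (0, m))) => x y.
    by have := GrD' 0 x 0 y; rewrite addr0.
  by rewrite (hm m) (hn n).
apply: (@pigeon R (Gr (1, 0)) (Gr (0, 1)) d d0) => m n.
rewrite -(lin m n) => h; have := key (m, n) h.
by case=> -> ->.
Qed.

Theorem lemma5 (R : realType) (G : group) (rho : G -> E2t R) (s t : G) :
  in_RE2t rho ->
  gmul s t = gmul t s ->
  gen_iso_ZZ s t ->
  (exists k : int, rot_part (rho s) = 2 * pi * k%:~R) /\
  (exists k : int, rot_part (rho t) = 2 * pi * k%:~R).
Proof.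
move=> hrho _ [f [fD [finj frange]]].
have mem x : (x = s \/ x = t) -> exists a, f a = x.
  move=> hx.
  have : range f x.
    by rewrite frange => H _ sub; apply: sub.
  by case=> a _ <-; exists a.
split.
- have [a <-] := mem s (or_introl erefl).
  by apply: cos_eq1; rewrite /rot_part; exact: (@main_cos R G rho f a hrho fD finj).
- have [a <-] := mem t (or_intror erefl).
  by apply: cos_eq1; rewrite /rot_part; exact: (@main_cos R G rho f a hrho fD finj).
Qed.
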